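(* Let $n\geqslant2$. Then $\mathrm{SR}(n+1,n)=\binom{n+3}{3}$ and $\mathrm{SR}(n,n)=\binom{n+3}{3}-\left\lfloor\frac{n+2}{2}\right\rfloor\left\lceil\frac{n+2}{2}\right\rceil$.
   Context: Let $p,q$ be distinct primes and $n,m$ positive integers. In $C_{p^nq^m}$ let $C_{p^aq^x}$ be the unique subgroup of order $p^aq^x$, and write $(a,x;b,y)$ for the pair of subgroups $(C_{p^aq^x},C_{p^bq^y})$ with $0\leqslant a\leqslant b\leqslant n$, $0\leqslant x\leqslant y\leqslant m$, $(a,x)\neq(b,y)$. Its midpoint is $(a+x+b+y)/2$, and $R_M$ is the set of all such pairs with midpoint $M$. The simple rainbow number $\mathrm{SR}(n,m)$ is $|R_{(n+m)/2}|$ if $n+m$ is odd, and $|R_{(n+m-1)/2}|$ (which equals $|R_{(n+m+1)/2}|$) if $n+m$ is even. *)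

(* Defs.v *)
From mathcomp Require Import all_boot.
Set Implicit Arguments. Unset Strict Implicit. Unset Printing Implicit Defensive.

(* A pair (a,x;b,y) of subgroups (C_{p^a q^x}, C_{p^b q^y}) of C_{p^n q^m},
   encoded by the exponent quadruple (a,x,b,y) with a,b <= n and x,y <= m. *)
Definition is_pair (n m : nat) (t : 'I_n.+1 * 'I_m.+1 * 'I_n.+1 * 'I_m.+1) : bool :=
  let: (a, x, b, y) := t in
  [&& (a <= b)%N, (x <= y)%N & ((a : nat), (x : nat)) != ((b : nat), (y : nat))].

(* |R_M| where the midpoint M is given through twoM = 2*M,
   i.e. a + x + b + y = twoM. *)
Definition R_card (n m twoM : nat) : nat :=
  #|[set t : 'I_n.+1 * 'I_m.+1 * 'I_n.+1 * 'I_m.+1 |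
       is_pair t && (let: (a, x, b, y) := t in (a + x + b + y == twoM)%N)]|.

Definition SR (n m : nat) : nat :=
  if odd (n + m) then R_card n m (n + m) else R_card n m (n + m - 1).

(* Main.v *)
Require Import Defs.
From mathcomp Require Import all_boot zify.
Set Implicit Arguments. Unset Strict Implicit.

Definition Q (N M T : nat) : nat :=
  \sum_(a < N.+1) \sum_(x < M.+1) \sum_(b < N.+1) \sum_(y < M.+1)
     ([&& (a <= b)%N, (x <= y)%N & (a + x + b + y == T)%N] : nat).
Definition Qs (N M T : nat) : nat :=
  \sum_(a < N.+1) \sum_(x < M.+1) \sum_(b < N.+1) \sum_(y < M.+1)
     ([&& (a < b)%N, (x < y)%N & (a + x + b + y == T)%N] : nat).
Definition A (N M T : nat) : nat :=
  \sum_(a < N.+1) \sum_(x < M.+1) \sum_(b < N.+1) \sum_(y < M.+1)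
     ([&& (a == b :> nat), (x <= y)%N & (a + x + b + y == T)%N] : nat).
Definition B (N M T : nat) : nat :=
  \sum_(a < N.+1) \sum_(x < M.+1) \sum_(b < N.+1) \sum_(y < M.+1)
     ([&& (a < b)%N, (x == y :> nat) & (a + x + b + y == T)%N] : nat).

Lemma Q_split N M T : Q N M T = Qs N M T + A N M T + B N M T.
Proof.
rewrite /Q /Qs /A /B -!big_split; apply: eq_bigr => a _.
rewrite -!big_split; apply: eq_bigr => x _.
rewrite -!big_split; apply: eq_bigr => b _.
rewrite -!big_split; apply: eq_bigr => y _ /=. lia.
Qed.

Lemma Qs_shift N M T : Qs N.+1 M.+1 T.+2 = Q N M T.
Proof.
rewrite /Qs big_ord_recr /= [X in _ + X]big1 ?addn0; last first.
  move=> x _; apply: big1 => b _; apply: big1 => y _.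
  have := ltn_ord b; lia.
apply: eq_bigr => a _.
rewrite big_ord_recr /= [X in _ + X]big1 ?addn0; last first.
  move=> b _; apply: big1 => y _.
  have := ltn_ord y; lia.
apply: eq_bigr => x _.
rewrite big_ord_recl big1 ?add0n; last by move=> y _.
apply: eq_bigr => b _.
rewrite big_ord_recl /= andbF add0n.
apply: eq_bigr => y _.
rewrite /bump /=. lia.
Qed.

Lemma sum_eq (L c G : nat) :
  \sum_(i < L) ((i == c :> nat) * G) = (c < L) * G.
Proof.
elim: L => [|L IH]; first by rewrite big_ord0.
rewrite big_ord_recr /= IH; case: ltngtP => H; try lia.
Qed.

Lemma sum_half (L s K : nat) :
  \sum_(a < L) ((a.*2 + s == K) : nat) =
  [&& s <= K, (K - s) %% 2 == 0 & (K - s) %/ 2 < L].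
Proof.
rewrite (eq_bigr (fun a : 'I_L => (a == (K - s) %/ 2 :> nat) *
            ((s <= K) && ((K - s) %% 2 == 0)))); last by move=> a _; lia.
rewrite sum_eq; lia.
Qed.

Lemma A_eq N M K : A N M K = \sum_(x < M.+1) \sum_(y < M.+1)
  ([&& x <= y, x + y <= K, (K - (x + y)) %% 2 == 0 & (K - (x + y)) %/ 2 < N.+1] : nat).
Proof.
rewrite /A.
transitivity (\sum_(a < N.+1) \sum_(x < M.+1) \sum_(y < M.+1)
   ((x <= y) * ((a.*2 + (x + y) == K) : nat))).
  apply: eq_bigr => a _; apply: eq_bigr => x _.
  rewrite (eq_bigr (fun b : 'I_N.+1 => (b == a :> nat) *
     \sum_(y < M.+1) ((x <= y) * ((a.*2 + (x + y) == K) : nat)))).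
    by rewrite sum_eq ltn_ord mul1n.
  move=> b _; rewrite big_distrr; apply: eq_bigr => y _ /=; lia.
rewrite exchange_big; apply: eq_bigr => x _; rewrite exchange_big; apply: eq_bigr => y _ /=.
rewrite -big_distrr sum_half /=; lia.
Qed.

Lemma B_eq N M K : B N M K = \sum_(a < N.+1) \sum_(b < N.+1)
  ([&& a < b, a + b <= K, (K - (a + b)) %% 2 == 0 & (K - (a + b)) %/ 2 < M.+1] : nat).
Proof.
rewrite /B; apply: eq_bigr => a _.
transitivity (\sum_(x < M.+1) \sum_(b < N.+1)
   ((a < b) * ((x.*2 + (a + b) == K) : nat))).
  apply: eq_bigr => x _; apply: eq_bigr => b _.
  rewrite (eq_bigr (fun y : 'I_M.+1 => (y == x :> nat) *
     ((a < b) * ((x.*2 + (a + b) == K) : nat)))).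
    by rewrite sum_eq ltn_ord mul1n.
  move=> y _ /=; lia.
rewrite exchange_big; apply: eq_bigr => b _ /=.
rewrite -big_distrr sum_half /=; lia.
Qed.

Definition D (m : nat) : nat :=
  \sum_(u < m) \sum_(v < m) ([&& u < v & (u + v) %% 2 == 1] : nat).

Lemma E_eq m c : \sum_(u < m) (((u + c) %% 2 == 1) : nat) = (m + c %% 2) %/ 2.
Proof.
elim: m => [|m IH]; first by rewrite big_ord0; lia.
rewrite big_ord_recr /= IH; lia.
Qed.

Lemma D_step m : D m.+1 = D m + (m.+1 %/ 2).
Proof.
rewrite /D big_ord_recr /= [X in _ + X]big1 ?addn0; last first.
  move=> v _; have := ltn_ord v; lia.
have -> : m.+1 %/ 2 = (m + m %% 2) %/ 2 by lia.
rewrite -E_eq -big_split /=; apply: eq_bigr => u _.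
rewrite big_ord_recr /=; congr (_ + _); have := ltn_ord u; lia.
Qed.

Lemma D_closed m : D m = m %/ 2 * (m.+1 %/ 2).
Proof.
elim: m => [|m IH]; first by rewrite /D big_ord0.
rewrite D_step IH.
have -> : m.+2 %/ 2 = m %/ 2 + 1 by lia.
nia.
Qed.

Lemma Dpair m : D m + D m.+1 = 'C(m.+1, 2).
Proof.
elim: m => [|m IH]; first by rewrite /D !big_ord_recr !big_ord0.
rewrite binS bin1 -IH !D_step; lia.
Qed.

Lemma Q_rec N M T : Q N.+1 M.+1 T.+2 = Q N M T + A N.+1 M.+1 T.+2 + B N.+1 M.+1 T.+2.
Proof. by rewrite Q_split Qs_shift. Qed.

Lemma F1 n : Q n.+1 n n.*2.+1 = 'C(n + 3, 3).
Proof.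
elim: n => [|n IH].
  by rewrite /Q !big_ord_recr !big_ord0 /=.
rewrite doubleS Q_rec IH A_eq B_eq.
have -> : n.+1 + 3 = (n + 3).+1 by lia.
rewrite binS -addnA; congr (_ + _).
have -> : n + 3 = (n.+2).+1 by lia.
rewrite -Dpair; congr (_ + _).
  apply: eq_bigr => x _; apply: eq_bigr => y _.
  have := ltn_ord x; have := ltn_ord y; lia.
apply: eq_bigr => x _; apply: eq_bigr => y _.
have := ltn_ord x; have := ltn_ord y; lia.
Qed.

Lemma F2 n : Q n.+1 n.+1 n.*2.+1 + D (n + 3) = 'C(n + 4, 3).
Proof.
elim: n => [|n IH].
  by rewrite /Q /D !big_ord_recr !big_ord0 /=.
rewrite doubleS Q_rec A_eq B_eq.
have -> : n.+1 + 4 = (n + 4).+1 by lia.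
rewrite binS -IH.
have -> : n + 4 = (n.+3).+1 by lia.
rewrite -Dpair.
have -> : n.+1 + 3 = n.+4 by lia.
have -> : n + 3 = n.+3 by lia.
have EA : \sum_(x < n.+3) \sum_(y < n.+3)
  ([&& x <= y, x + y <= (n.*2.+1).+2, ((n.*2.+1).+2 - (x + y)) %% 2 == 0
     & ((n.*2.+1).+2 - (x + y)) %/ 2 < n.+3] : nat) = D n.+3.
  apply: eq_bigr => x _; apply: eq_bigr => y _.
  have := ltn_ord x; have := ltn_ord y; lia.
have EB : \sum_(x < n.+3) \sum_(y < n.+3)
  ([&& x < y, x + y <= (n.*2.+1).+2, ((n.*2.+1).+2 - (x + y)) %% 2 == 0
     & ((n.*2.+1).+2 - (x + y)) %/ 2 < n.+3] : nat) = D n.+3.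
  apply: eq_bigr => x _; apply: eq_bigr => y _.
  have := ltn_ord x; have := ltn_ord y; lia.
rewrite EA EB; lia.
Qed.

Lemma R_Q N M T : odd T -> R_card N M T = Q N M T.
Proof.
move=> oT; have := modn2 T; rewrite oT /= => mT.
rewrite /R_card /Q -sum1_card big_mkcond /= !pair_bigA /=.
apply: eq_bigr => [[[[a x] b] y]] _; rewrite inE /= xpair_eqE.
case: ifP => /=; lia.
Qed.

Theorem lemma7p8 (n : nat) : (2 <= n)%N ->
  SR n.+1 n = 'C(n + 3, 3) /\
  SR n n = 'C(n + 3, 3) - ((n + 2) %/ 2) * ((n + 3) %/ 2).
Proof.
move=> n2; rewrite /SR.
have -> : n.+1 + n = n.*2.+1 by lia.
have -> : odd n.*2.+1 by rewrite /= odd_double.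
have -> : odd (n + n) = false by rewrite addnn odd_double.
split; first by rewrite R_Q ?F1 //= odd_double.
case: n n2 => [//|k] _.
have -> : k.+1 + k.+1 - 1 = k.*2.+1 by lia.
rewrite R_Q /=; last by rewrite odd_double.
have := F2 k; rewrite D_closed.
have -> : k.+1 + 3 = k + 4 by lia.
have -> : k.+1 + 2 = k + 3 by lia.
have -> : (k + 3).+1 = k + 4 by lia.
lia.
Qed.
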